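(* Let $B$ be a nonempty finite set and $M\subseteq\omega^B$ an upper set. Then the function $x\mapsto\nu_x(M)$ on $\mathbb{R}_{\ge0}$ is: identically $0$ if $M$ is empty; identically $1$ if $M=\omega^B$; and otherwise strictly increasing and continuous, with $\nu_0(M)=0$ and $\lim_{x\to\infty}\nu_x(M)=1$.
   Context: $\omega$ denotes the set of nonnegative integers and $\omega^B$ the set of functions $B\to\omega$, ordered pointwise. $M\subseteq\omega^B$ is an upper set if $f\in M$ and $f\le g$ imply $g\in M$. The geometric distribution on $\omega$ with parameter $0<p\le1$ assigns probability $p(1-p)^k$ to $k$ (with $0^0=1$). For $T\in\mathbb{R}_{\ge0}$, $\nu_T$ is the probability measure on $\omega^B$ which is the product of $\#B$ copies of the geometric distribution with parameter $(1+T/\#B)^{-1}$. *)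

(* Defs.v *)
From HB Require Import structures.
From mathcomp Require Import all_boot.
From Stdlib Require Import Reals ClassicalEpsilon.



Unset Printing Implicit Defensive.

Local Open Scope R_scope.

(* geometric distribution with parameter p: k |-> p (1-p)^k  (0^0 = 1) *)
Definition geom (p : R) (k : nat) : R := p * (1 - p) ^ k.

Definition nu_param (B : finType) (T : R) : R := / (1 + T / INR #|B|).

Definition nu_weight (B : finType) (T : R) (f : B -> nat) : R :=
  \big[Rmult/1]_(b : B) geom (nu_param B T) (f b).

Definition indic (B : finType) (M : (B -> nat) -> Prop) (f : B -> nat) : R :=
  if excluded_middle_informative (M f) then 1 else 0.

Definition nu_partial (B : finType) (T : R) (M : (B -> nat) -> Prop) (N : nat) : R :=
  \big[Rplus/0]_(g : {ffun B -> 'I_N})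
     (indic B M (fun b => nat_of_ord (g b)) * nu_weight B T (fun b => nat_of_ord (g b))).

(* nu_T(M) = sum_{f in M} nu_T({f}) (countable sum of nonnegative terms),
   i.e. the limit of the partial sums over the exhausting boxes {0..N-1}^B. *)
Definition nu (B : finType) (T : R) (M : (B -> nat) -> Prop) : R :=
  epsilon (inhabits 0) (fun v => Un_cv (nu_partial B T M) v).

Definition upper_set (B : finType) (M : (B -> nat) -> Prop) : Prop :=
  forall f g : B -> nat, (forall b, leq (f b) (g b)) -> M f -> M g.

(* Main.v *)
Require Import Defs.
From HB Require Import structures.
From mathcomp Require Import all_boot.
From Stdlib Require Import Reals Lra ClassicalEpsilon FunctionalExtensionality.

Local Open Scope R_scope.

Lemma RpA : associative Rplus. Proof. intros a b c; ring. Qed.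
Lemma RmA : associative Rmult. Proof. intros a b c; ring. Qed.
HB.instance Definition _ := Monoid.isComLaw.Build R 0 Rplus RpA Rplus_comm Rplus_0_l.
HB.instance Definition _ := Monoid.isComLaw.Build R 1 Rmult RmA Rmult_comm Rmult_1_l.
Lemma Rmul0x : left_zero 0 Rmult. Proof. intro; ring. Qed.
Lemma Rmulx0 : right_zero 0 Rmult. Proof. intro; ring. Qed.
HB.instance Definition _ := Monoid.isMulLaw.Build R 0 Rmult Rmul0x Rmulx0.
Lemma Rdl : left_distributive Rmult Rplus. Proof. intros a b c; ring. Qed.
Lemma Rdr : right_distributive Rmult Rplus. Proof. intros a b c; ring. Qed.
HB.instance Definition _ := Monoid.isAddLaw.Build R Rmult Rplus Rdl Rdr.

Definition ind (P : Prop) : R := if excluded_middle_informative P then 1 else 0.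

Lemma ind_ge0 P : 0 <= ind P.
Proof. rewrite /ind; case: excluded_middle_informative => ? /=; lra. Qed.

Lemma ind_le1 P : ind P <= 1.
Proof. rewrite /ind; case: excluded_middle_informative => ? /=; lra. Qed.

Lemma geom_ge0 a k : 0 <= a <= 1 -> 0 <= geom a k.
Proof. move=> Ha; rewrite /geom; apply: Rmult_le_pos; first lra. apply: pow_le; lra. Qed.

Lemma pow_le1 x n : 0 <= x <= 1 -> x ^ n <= 1.
Proof.
move=> Hx; elim: n => [|n IH] /=; first lra.
have : 0 <= x ^ n by apply: pow_le; lra.
nra.
Qed.

Definition Eo (c : nat -> Prop) (a : R) (N : nat) : R :=
  \big[Rplus/0]_(k < N) (ind (c k) * geom a k).

Lemma mono_iter (c : nat -> Prop) : (forall k, c k -> c (S k)) ->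
  forall j N : nat, (j <= N)%nat -> c j -> c N.
Proof.
move=> mono j N; elim: N => [|N IH].
  by rewrite leqn0 => /eqP ->.
rewrite leq_eqVlt => /orP [/eqP -> //|]; rewrite ltnS => H cj.
by apply: mono; apply: IH.
Qed.

Lemma onedim (c : nat -> Prop) (mono : forall k, c k -> c (S k)) N :
  ((forall k, (k < N)%nat -> ~ c k) /\ (forall a, Eo c a N = 0))
  \/ exists j, (j < N)%nat /\ (forall k, (k < j)%nat -> ~ c k) /\ c j /\
       forall a, Eo c a N = (1 - a) ^ j - (1 - a) ^ N.
Proof.
elim: N => [|N [[H1 H2]|[j [Hj [H1 [H2 H3]]]]]].
- left; split => // a; by rewrite /Eo big_ord0.
- case: (classic (c N)) => cN.
  + right; exists N; split => //; split => //; split => // a.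
    rewrite /Eo big_ord_recr /= -/(Eo c a N) H2 /ind.
    case: excluded_middle_informative => [?|//] /=.
    rewrite /geom /=; ring.
  + left; split.
    * move=> k; rewrite ltnS leq_eqVlt => /orP [/eqP -> //|]; exact: H1.
    * move=> a; rewrite /Eo big_ord_recr /= -/(Eo c a N) H2 /ind.
      case: excluded_middle_informative => [//|?] /=; ring.
- right; exists j; split; first exact: ltnW.
  split => //; split => // a.
  have cN : c N := @mono_iter c mono j N (ltnW Hj) H2.
  rewrite /Eo big_ord_recr /= -/(Eo c a N) H3 /ind.
  case: excluded_middle_informative => [?|//] /=.
  rewrite /geom /=; ring.
Qed.

Lemma PD1 x y j : 0 <= x <= y -> y <= 1 -> (y ^ j - x ^ j) * (1 - y) <= y - x.
Proof.
move=> Hxy Hy; elim: j => [|j IH] /=; first lra.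
have h1 : 0 <= x ^ j <= 1 by split; [apply: pow_le; lra| apply: pow_le1; lra].
have h2 : (y * y ^ j - x * x ^ j) * (1 - y) = y * ((y ^ j - x ^ j) * (1 - y)) + x ^ j * (y - x) * (1 - y) by ring.
rewrite h2.
have h3 : y * ((y ^ j - x ^ j) * (1 - y)) <= y * (y - x) by apply: Rmult_le_compat_l; lra.
have h4 : x ^ j * (y - x) * (1 - y) <= (y - x) * (1 - y).
  rewrite Rmult_assoc; rewrite -[X in _ <= X]Rmult_1_l; apply: Rmult_le_compat_r; try lra.
  apply: Rmult_le_pos; lra.
nra.
Qed.

Lemma PD2 x y i : 0 <= x <= y -> (y - x) * y ^ i <= y ^ (S i) - x ^ (S i).
Proof.
move=> Hxy; elim: i => [|i IH] /=; first lra.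
have h2 : y * (y * y ^ i) - x * (x * x ^ i) = y * (y ^ (S i) - x ^ (S i)) + x ^ (S i) * (y - x) by simpl; ring.
rewrite h2.
have h3 : y * ((y - x) * y ^ i) <= y * (y ^ (S i) - x ^ (S i)) by apply: Rmult_le_compat_l; lra.
have h4 : 0 <= x ^ (S i) * (y - x) by apply: Rmult_le_pos; [apply: pow_le|]; lra.
nra.
Qed.

Lemma pow_dec q m j : 0 <= q <= 1 -> (j <= m)%nat -> q ^ m <= q ^ j.
Proof.
move=> Hq Hjm; rewrite -(subnK Hjm) pow_add.
rewrite -[X in _ <= X]Rmult_1_l; apply: Rmult_le_compat_r; first by apply: pow_le; lra.
apply: pow_le1; lra.
Qed.

Lemma Dbounds (c : nat -> Prop) (mono : forall k, c k -> c (S k)) N a a' :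
  0 < a' <= a -> a <= 1 ->
  - (1 - a') ^ N <= Eo c a' N - Eo c a N /\
  (Eo c a' N - Eo c a N) * a' <= a - a' /\
  (forall m : nat, ~ c 0%nat -> c m -> (m < N)%nat ->
     (a - a') * (1 - a') ^ m - (1 - a') ^ N <= Eo c a' N - Eo c a N).
Proof.
move=> Ha Ha1.
have Hy : 0 <= (1 - a') ^ N by apply: pow_le; lra.
case: (@onedim c mono N) => [[H1 H2]|[j [Hj [H1 [H2 H3]]]]].
- rewrite !H2; split; [lra|split; [lra|]].
  move=> m _ cm Hm; by case: (H1 m Hm).
- rewrite !H3.
  set y := 1 - a'; set x := 1 - a.
  have Hxy : 0 <= x <= y by rewrite /x /y; lra.
  have Hxj := pow_incr x y j Hxy.
  have HxN := pow_incr x y N Hxy.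
  have HxN0 : 0 <= x ^ N by apply: pow_le; lra.
  split; first lra.
  split.
  + have := PD1 x y j Hxy (ltac:(rewrite /y; lra)).
    have : 0 <= (y ^ N - x ^ N) * a' by apply: Rmult_le_pos; lra.
    rewrite /y /x; nra.
  + move=> m c0 cm Hm.
    have Hj0 : j <> 0%nat by move=> E; rewrite E in H2.
    have Hjm : (j <= m)%nat.
      case: (leqP j m) => // Hmj; by case: (H1 m Hmj).
    destruct j as [|i]; first done.
    have := PD2 x y i Hxy.
    have Hym : y ^ m <= y ^ i by apply: pow_dec; [rewrite /y; lra| exact: ltnW].
    have : (a - a') * y ^ m <= (a - a') * y ^ i by apply: Rmult_le_compat_l; lra.
    have -> : a - a' = y - x by rewrite /y /x; ring.
    lra.
Qed.

Section Fin.
Variable B : finType.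
Variable M : (B -> nat) -> Prop.

Definition nf {N} (g : {ffun B -> 'I_N}) : B -> nat := fun b => nat_of_ord (g b).
Definition Wt (r : B -> R) (f : B -> nat) : R := \big[Rmult/1]_(b : B) geom (r b) (f b).
Definition FF (N : nat) (r : B -> R) : R :=
  \big[Rplus/0]_(g : {ffun B -> 'I_N}) (ind (M (nf g)) * Wt r (nf g)).
Definition Pr (r : B -> R) (b0 : B) (f : B -> nat) : R :=
  \big[Rmult/1]_(b : B) (if b == b0 then 1 else geom (r b) (f b)).
Definition updn (f : B -> nat) (b0 : B) (k : nat) : B -> nat :=
  fun b => if b == b0 then k else f b.
Definition upd {N} (g : {ffun B -> 'I_N}) (b0 : B) (k : 'I_N) : {ffun B -> 'I_N} :=
  [ffun b => if b == b0 then k else g b].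

Lemma partial_FF T N : nu_partial B T M N = FF N (fun _ => nu_param B T).
Proof. reflexivity. Qed.

Lemma Wt_split r f b0 : Wt r f = geom (r b0) (f b0) * Pr r b0 f.
Proof.
rewrite /Wt /Pr (bigD1 b0) //=. rewrite [in RHS](bigD1 b0) //= eqxx Rmult_1_l.
congr (_ * _); apply: eq_bigr => b /negbTE ->; done.
Qed.

Lemma Pr_updn r b0 f k : Pr r b0 (updn f b0 k) = Pr r b0 f.
Proof. apply: eq_bigr => b _; rewrite /updn; by case: (b == b0). Qed.

Lemma Pr_ext r r' b0 f : (forall b, b != b0 -> r b = r' b) -> Pr r b0 f = Pr r' b0 f.
Proof.
move=> H; apply: eq_bigr => b _; case: eqP => // /eqP Hb; by rewrite H.
Qed.

Lemma nf_upd N (g : {ffun B -> 'I_N}) b0 k : nf (upd g b0 k) = updn (nf g) b0 k.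
Proof.
apply: functional_extensionality => b; rewrite /nf /upd /updn ffunE.
by case: (b == b0).
Qed.

Lemma decomp N b0 (G : {ffun B -> 'I_N.+1} -> R) :
  \big[Rplus/0]_(g : {ffun B -> 'I_N.+1}) G g =
  \big[Rplus/0]_(g : {ffun B -> 'I_N.+1} | g b0 == ord0) \big[Rplus/0]_(k < N.+1) G (upd g b0 k).
Proof.
rewrite (partition_big (fun g : {ffun B -> 'I_N.+1} => upd g b0 ord0) (fun j : {ffun B -> 'I_N.+1} => j b0 == ord0)) /=; last first.
  by move=> g _; rewrite /upd ffunE eqxx.
apply: eq_bigr => j /eqP Hj.
rewrite (reindex_onto (fun k : 'I_N.+1 => upd j b0 k) (fun g : {ffun B -> 'I_N.+1} => g b0)) /=; last first.
  move=> g /eqP Hg; apply/ffunP => b; rewrite /upd ffunE.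
  case: eqP => [->//|/eqP Hb].
  by rewrite -Hg /upd ffunE (negbTE Hb).
apply: eq_bigl => k.
rewrite /upd ffunE eqxx eqxx andbT.
apply/eqP/ffunP => b; rewrite !ffunE.
by case: eqP => [->|].
Qed.


Lemma prod01 (F : B -> R) : (forall b, 0 <= F b <= 1) -> 0 <= \big[Rmult/1]_(b : B) F b <= 1.
Proof.
move=> H; apply: (big_ind (fun x => 0 <= x <= 1)); [lra| |by move=> b _; apply: H].
move=> x y Hx Hy; split; [apply: Rmult_le_pos; lra|].
have : x * y <= 1 * 1 by apply: Rmult_le_compat; lra. lra.
Qed.

Lemma sum_ge0 (I : finType) (P : pred I) (F : I -> R) : (forall i, P i -> 0 <= F i) ->
  0 <= \big[Rplus/0]_(i | P i) F i.
Proof.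
move=> H; apply: (big_ind (fun x => 0 <= x)); [lra| |exact: H].
move=> x y; lra.
Qed.

Lemma sum_le (I : finType) (P : pred I) (F G : I -> R) : (forall i, P i -> F i <= G i) ->
  \big[Rplus/0]_(i | P i) F i <= \big[Rplus/0]_(i | P i) G i.
Proof.
move=> H; apply: (big_ind2 (fun x y => x <= y)); [lra| |exact: H].
move=> x1 x2 y1 y2; lra.
Qed.

Lemma geom_sum a N : \big[Rplus/0]_(k < N) geom a k = 1 - (1 - a) ^ N.
Proof.
elim: N => [|N IH]; first by rewrite big_ord0 /=; ring.
rewrite big_ord_recr /= IH /geom /=; ring.
Qed.

Lemma mass N r : (forall b, 0 <= r b <= 1) ->
  0 <= \big[Rplus/0]_(g : {ffun B -> 'I_N}) Wt r (nf g) <= 1.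
Proof.
move=> Hr.
have -> : \big[Rplus/0]_(g : {ffun B -> 'I_N}) Wt r (nf g) =
   \big[Rmult/1]_(b : B) \big[Rplus/0]_(k < N) geom (r b) k.
  by rewrite bigA_distr_bigA.
apply: prod01 => b; rewrite geom_sum.
have := Hr b => Hb.
have : 0 <= (1 - r b) ^ N <= 1 by split; [apply: pow_le|apply: pow_le1]; lra.
lra.
Qed.

Lemma Wt_ge0 r f : (forall b, 0 <= r b <= 1) -> 0 <= Wt r f.
Proof.
move=> Hr; apply: (big_ind (fun x => 0 <= x)); [lra| |move=> b _; exact: geom_ge0].
move=> x y; apply: Rmult_le_pos.
Qed.

Lemma FF_bounds N r : (forall b, 0 <= r b <= 1) -> 0 <= FF N r <= 1.
Proof.
move=> Hr; split.
  apply: sum_ge0 => g _; apply: Rmult_le_pos; [exact: ind_ge0|exact: Wt_ge0].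
apply: (Rle_trans _ (\big[Rplus/0]_(g : {ffun B -> 'I_N}) Wt r (nf g))); last by case: (mass N r Hr).
apply: sum_le => g _.
have := ind_le1 (M (nf g)); have := Wt_ge0 r (nf g) Hr.
have := ind_ge0 (M (nf g)); nra.
Qed.

Lemma Pr_ge0 r b0 f : (forall b, 0 <= r b <= 1) -> 0 <= Pr r b0 f.
Proof.
move=> Hr; apply: (big_ind (fun x => 0 <= x)); [lra| |].
  move=> x y; apply: Rmult_le_pos.
move=> b _; case: (b == b0); [lra|exact: geom_ge0].
Qed.

Lemma PrSum N r b0 : (forall b, 0 <= r b <= 1) ->
  \big[Rplus/0]_(g : {ffun B -> 'I_N.+1} | g b0 == ord0) Pr r b0 (nf g) <= 1.
Proof.
move=> Hr.
pose G (b : B) (k : 'I_N.+1) := if b == b0 then (if k == ord0 then 1 else 0) else geom (r b) k.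
have -> : \big[Rplus/0]_(g : {ffun B -> 'I_N.+1} | g b0 == ord0) Pr r b0 (nf g) =
   \big[Rplus/0]_(g : {ffun B -> 'I_N.+1}) \big[Rmult/1]_(b : B) G b (g b).
  rewrite big_mkcond; apply: eq_bigr => g _.
  case: ifP => Hg.
    apply: eq_bigr => b _; rewrite /G; case: eqP => [->|//]; by rewrite Hg.
  rewrite (bigD1 b0) //= /G eqxx Hg Rmult_0_l //.
rewrite -bigA_distr_bigA.
apply: (proj2 (prod01 _ _)) => b; rewrite /G; case: eqP => _.
  rewrite big_ord_recl /= big1 ?Rplus_0_r; [lra|done].
have Hb := Hr b.
have -> : \big[Rplus/0]_(k < N.+1) geom (r b) k = 1 - (1 - r b) ^ N.+1 by apply: geom_sum.
have : 0 <= (1 - r b) ^ N.+1 <= 1 by split; [apply: pow_le|apply: pow_le1]; lra.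
lra.
Qed.

Lemma FF_decomp N r b0 :
  FF N.+1 r = \big[Rplus/0]_(g : {ffun B -> 'I_N.+1} | g b0 == ord0)
     (Pr r b0 (nf g) * Eo (fun k => M (updn (nf g) b0 k)) (r b0) N.+1).
Proof.
rewrite /FF (decomp N b0); apply: eq_bigr => g _.
rewrite /Eo big_distrr; apply: eq_bigr => k _ /=.
rewrite nf_upd (Wt_split _ _ b0) Pr_updn /updn eqxx; ring.
Qed.


Lemma sum_opp (I : finType) (P : pred I) (F : I -> R) :
  - (\big[Rplus/0]_(i | P i) F i) = \big[Rplus/0]_(i | P i) (- F i).
Proof.
apply: (big_morph Ropp); [move=> x y; ring| ring].
Qed.

Lemma sum_mull (I : finType) (P : pred I) (F : I -> R) c :
  c * \big[Rplus/0]_(i | P i) F i = \big[Rplus/0]_(i | P i) (c * F i).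
Proof. by rewrite big_distrr. Qed.

Lemma sum_sub (I : finType) (P : pred I) (F G : I -> R) :
  \big[Rplus/0]_(i | P i) F i - \big[Rplus/0]_(i | P i) G i =
  \big[Rplus/0]_(i | P i) (F i - G i).
Proof. by rewrite /Rminus sum_opp -big_split. Qed.

Lemma updn_mono (HM : upper_set B M) f b0 k : M (updn f b0 k) -> M (updn f b0 k.+1).
Proof.
apply: HM => b; rewrite /updn; case: (b == b0) => //; exact: leqnSn.
Qed.

Lemma coord N r r' b0 a a' :
  upper_set B M ->
  (forall b, 0 <= r b <= 1) ->
  (forall b, b != b0 -> r b = r' b) -> r b0 = a -> r' b0 = a' -> 0 < a' <= a -> a <= 1 ->
  - (1 - a') ^ N.+1 <= FF N.+1 r' - FF N.+1 r /\
  (FF N.+1 r' - FF N.+1 r) * a' <= a - a' /\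
  (forall (g0 : {ffun B -> 'I_N.+1}) (m : nat), g0 b0 == ord0 ->
     ~ M (updn (nf g0) b0 0%nat) -> M (updn (nf g0) b0 m) -> (m < N.+1)%nat ->
     Pr r b0 (nf g0) * ((a - a') * (1 - a') ^ m) - (1 - a') ^ N.+1 <= FF N.+1 r' - FF N.+1 r).
Proof.
move=> HM Hr Hrr' Ha Ha' Haa Ha1.
rewrite (FF_decomp N r' b0) (FF_decomp N r b0) Ha Ha'.
under eq_bigr => g _ do rewrite -(Pr_ext r r' b0 (nf g) Hrr').
rewrite sum_sub.
set y := (1 - a') ^ N.+1.
have Hy : 0 <= y by apply: pow_le; lra.
have HPs := PrSum N r b0 Hr.
have HPs0 : 0 <= \big[Rplus/0]_(g : {ffun B -> 'I_N.+1} | g b0 == ord0) Pr r b0 (nf g)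
  by apply: sum_ge0 => g _; exact: Pr_ge0.
set S := \big[Rplus/0]_(g : {ffun B -> 'I_N.+1} | g b0 == ord0) Pr r b0 (nf g) in HPs HPs0.
have DB := fun (g : {ffun B -> 'I_N.+1}) =>
   @Dbounds (fun k => M (updn (nf g) b0 k)) (updn_mono HM (nf g) b0) N.+1 a a' Haa Ha1.
split.
  apply: (Rle_trans _ (- y * S)); first nra.
  rewrite /S sum_mull; apply: sum_le => g _.
  have [H1 _] := DB g; have := Pr_ge0 r b0 (nf g) Hr.
  fold y in H1; nra.
split.
  rewrite Rmult_comm sum_mull.
  apply: (Rle_trans _ ((a - a') * S)); last first.
    have : 0 <= (a - a') * (1 - S) by apply: Rmult_le_pos; lra. nra.
  rewrite /S sum_mull; apply: sum_le => g _.
  have [_ [H2 _]] := DB g; have := Pr_ge0 r b0 (nf g) Hr.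
  nra.
move=> g0 m Hg0 c0 cm Hm.
set F := fun g : {ffun B -> 'I_N.+1} =>
   (Pr r b0 (nf g) * Eo (fun k => M (updn (nf g) b0 k)) a' N.+1 -
    Pr r b0 (nf g) * Eo (fun k => M (updn (nf g) b0 k)) a N.+1).
have -> : \big[Rplus/0]_(g : {ffun B -> 'I_N.+1} | g b0 == ord0) F g =
   \big[Rplus/0]_(g : {ffun B -> 'I_N.+1} | g b0 == ord0) (F g + y * Pr r b0 (nf g)) - y * S.
  by rewrite /S sum_mull sum_sub; apply: eq_bigr => g _; ring.
rewrite (bigD1 g0) //=.
have Hrest : 0 <= \big[Rplus/0]_(g : {ffun B -> 'I_N.+1} | (g b0 == ord0) && (g != g0)) (F g + y * Pr r b0 (nf g)).
  apply: sum_ge0 => g _; rewrite /F.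
  have [H1 _] := DB g; have := Pr_ge0 r b0 (nf g) Hr.
  fold y in H1; nra.
have [_ [_ H3]] := DB g0.
have := H3 m c0 cm Hm; fold y => H4.
have HP0 := Pr_ge0 r b0 (nf g0) Hr.
have : Pr r b0 (nf g0) * ((a - a') * (1 - a') ^ m) <= F g0 + y * Pr r b0 (nf g0).
  rewrite /F; nra.
have : y * S <= y by nra.
move=> h1 h2. move: Hrest. set Z := \big[Rplus/0]_(i | _) _. move=> Hrest. lra.
Qed.


Definition rs (s : seq B) (a a' : R) : B -> R := fun b => if b \in s then a' else a.

Lemma rs_bounds s a a' : 0 < a' <= a -> a <= 1 -> forall b, 0 <= rs s a a' b <= 1.
Proof. move=> H1 H2 b; rewrite /rs; case: (b \in s); lra. Qed.

Lemma chain N a a' : upper_set B M -> 0 < a' <= a -> a <= 1 -> forall s : seq B,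
  - INR (size s) * (1 - a') ^ N.+1 <= FF N.+1 (rs s a a') - FF N.+1 (rs [::] a a') /\
  (FF N.+1 (rs s a a') - FF N.+1 (rs [::] a a')) * a' <= INR (size s) * (a - a').
Proof.
move=> HM Haa Ha1.
have Hy : 0 <= (1 - a') ^ N.+1 by apply: pow_le; lra.
elim=> [|b s [IH1 IH2]].
  rewrite /= Rminus_diag; split; lra.
rewrite (_ : INR (size (b :: s)) = INR (size s) + 1); last by rewrite -S_INR.
case Hbs: (b \in s).
  have -> : rs (b :: s) a a' = rs s a a'.
    apply: functional_extensionality => b'; rewrite /rs in_cons.
    by case: eqP => [->|]; rewrite ?Hbs.
  split; nra.
have [C1 [C2 _]] := @coord N (rs s a a') (rs (b :: s) a a') b a a' HM (rs_bounds s a a' Haa Ha1)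
  (fun b' Hb' => ltac:(by rewrite /rs in_cons (negbTE Hb')))
  (ltac:(by rewrite /rs Hbs)) (ltac:(by rewrite /rs in_cons eqxx)) Haa Ha1.
split; nra.
Qed.

Definition hs (f : B -> nat) (s : seq B) : B -> nat := fun b => if b \in s then f b else 0%nat.

Lemma Pr_pos s a a' f b0 : 0 < a' < 1 -> 0 < a <= 1 -> 0 < Pr (rs s a a') b0 (hs f s).
Proof.
move=> Ha' Ha.
apply: (big_ind (fun x => 0 < x)); [lra| |].
  move=> x y; apply: Rmult_lt_0_compat.
move=> b _; case: (b == b0); first lra.
rewrite /rs /hs /geom; case: (b \in s) => /=.
  apply: Rmult_lt_0_compat; [lra|apply: pow_lt; lra].
lra.
Qed.

Lemma chain_strict a a' f : upper_set B M -> ~ M (fun _ => 0%nat) ->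
  0 < a' < a -> a <= 1 -> a' < 1 -> forall s, M (hs f s) ->
  exists d, 0 < d /\ forall N, (forall b, (f b < N.+1)%nat) ->
    d - INR (size s) * (1 - a') ^ N.+1 <= FF N.+1 (rs s a a') - FF N.+1 (rs [::] a a').
Proof.
move=> HM H0 Haa Ha1 Ha'1.
have Haa' : 0 < a' <= a by lra.
elim=> [|b s IH] Hs.
  case: H0; apply: (HM _ _ _ Hs) => b; by rewrite /hs in_nil.
case Hbs: (b \in s).
  have E1 : rs (b :: s) a a' = rs s a a'.
    apply: functional_extensionality => b'; rewrite /rs in_cons.
    by case: eqP => [->|]; rewrite ?Hbs.
  have E2 : hs f (b :: s) = hs f s.
    apply: functional_extensionality => b'; rewrite /hs in_cons.
    by case: eqP => [->|]; rewrite ?Hbs.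
  rewrite E2 in Hs; have [d [Hd HN]] := IH Hs.
  exists d; split => // N HfN; rewrite E1 (_ : INR (size (b :: s)) = INR (size s) + 1); last by rewrite -S_INR.
  have := HN N HfN.
  have : 0 <= (1 - a') ^ N.+1 by apply: pow_le; lra.
  nra.
have Hagree : forall b', b' != b -> rs s a a' b' = rs (b :: s) a a' b'.
  by move=> b' Hb'; rewrite /rs in_cons (negbTE Hb').
have Hrb : rs s a a' b = a by rewrite /rs Hbs.
have Hrb' : rs (b :: s) a a' b = a' by rewrite /rs in_cons eqxx.
case: (classic (M (hs f s))) => Hms.
  have [d [Hd HN]] := IH Hms.
  exists d; split => // N HfN; rewrite (_ : INR (size (b :: s)) = INR (size s) + 1); last by rewrite -S_INR.
  have := HN N HfN.
  have [C1 _] := @coord N (rs s a a') (rs (b :: s) a a') b a a' HM (rs_bounds s a a' Haa' Ha1) Hagree Hrb Hrb' Haa' Ha1.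
  have : 0 <= (1 - a') ^ N.+1 by apply: pow_le; lra.
  nra.
exists (Pr (rs s a a') b (hs f s) * ((a - a') * (1 - a') ^ (f b))); split.
  apply: Rmult_lt_0_compat; first by apply: Pr_pos; lra.
  apply: Rmult_lt_0_compat; [lra|apply: pow_lt; lra].
move=> N HfN.
pose g0 : {ffun B -> 'I_N.+1} := [ffun b' => inord (hs f s b')].
have Hg0 : nf g0 = hs f s.
  apply: functional_extensionality => b'; rewrite /nf /g0 ffunE inordK //.
  rewrite /hs; case: (b' \in s) => //.
have [_ [_ C3]] := @coord N (rs s a a') (rs (b :: s) a a') b a a' HM (rs_bounds s a a' Haa' Ha1) Hagree Hrb Hrb' Haa' Ha1.
have := C3 g0 (f b).
rewrite Hg0.
have E0 : updn (hs f s) b 0 = hs f s.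
  apply: functional_extensionality => b'; rewrite /updn /hs.
  by case: eqP => [->|//]; rewrite Hbs.
have E1 : updn (hs f s) b (f b) = hs f (b :: s).
  apply: functional_extensionality => b'; rewrite /updn /hs in_cons.
  by case: eqP => [->|] //=.
rewrite E0 E1 => C.
have C' := C (ltac:(apply/eqP; apply: val_inj; rewrite /g0 ffunE /= inordK /hs Hbs //)) Hms Hs (HfN b).
have [C1 _] := chain N a a' HM Haa' Ha1 s.
rewrite (_ : INR (size (b :: s)) = INR (size s) + 1); last by rewrite -S_INR.
lra.
Qed.


Lemma sum_widen N (G : (B -> nat) -> R) : (forall f, 0 <= G f) ->
  \big[Rplus/0]_(g : {ffun B -> 'I_N}) G (nf g) <= \big[Rplus/0]_(g : {ffun B -> 'I_N.+1}) G (nf g).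
Proof.
move=> HG.
pose h (g : {ffun B -> 'I_N}) : {ffun B -> 'I_N.+1} := [ffun b => widen_ord (leqnSn N) (g b)].
have Hinj : {in [set: {ffun B -> 'I_N}] &, injective h}.
  move=> g1 g2 _ _ E; apply/ffunP => b.
  have := congr1 (fun g : {ffun B -> 'I_N.+1} => nat_of_ord (g b)) E; rewrite /h !ffunE /= => E'.
  exact: val_inj.
have E1 : \big[Rplus/0]_(g : {ffun B -> 'I_N}) G (nf g) =
    \big[Rplus/0]_(g in [set h x | x in [set: {ffun B -> 'I_N}]]) G (nf g).
  rewrite big_imset //=; apply: eq_big => [g|g _]; first by rewrite in_setT.
  congr G; apply: functional_extensionality => b; by rewrite /nf /h ffunE.
rewrite E1 [X in _ <= X](bigID (fun g => g \in [set h x | x in [set: {ffun B -> 'I_N}]])) /=.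
have : 0 <= \big[Rplus/0]_(i | i \notin [set h x | x in [set: {ffun B -> 'I_N}]]) G (nf i).
  by apply: sum_ge0.
move=> H. apply: (Rle_trans _ _ _ _ (Rplus_le_compat_l _ _ _ H)). rewrite Rplus_0_r; right; apply: eq_bigl => g //.
Qed.

Lemma FF_growing r : (forall b, 0 <= r b <= 1) -> Un_growing (fun N => FF N r).
Proof.
move=> Hr N; apply: (sum_widen N (fun f => ind (M f) * Wt r f)) => f.
apply: Rmult_le_pos; [exact: ind_ge0|exact: Wt_ge0].
Qed.

Lemma geom_tail a j N : (j <= N)%nat ->
  \big[Rplus/0]_(k < N) (if (j <= k)%nat then geom a k else 0) = (1 - a) ^ j - (1 - a) ^ N.
Proof.
elim: N => [|N IH].
  rewrite leqn0 => /eqP ->; rewrite big_ord0 /=; ring.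
rewrite leq_eqVlt => /orP [/eqP ->|HjN].
  rewrite big1 ?Rminus_diag // => k _.
  by rewrite leqNgt (ltn_ord k).
have HjN' : (j <= N)%nat by []. rewrite big_ord_recr /= IH // HjN' /geom /=; ring.
Qed.

Lemma prod_mono (F G : B -> R) : (forall b, 0 <= F b <= G b) ->
  \big[Rmult/1]_(b : B) F b <= \big[Rmult/1]_(b : B) G b.
Proof.
move=> H.
suff : 0 <= \big[Rmult/1]_(b : B) F b <= \big[Rmult/1]_(b : B) G b by case.
apply: (big_ind2 (fun x y => 0 <= x <= y)); [lra| |by move=> b _; apply: H].
move=> x1 x2 y1 y2 Hx Hy; split; [apply: Rmult_le_pos; lra|].
apply: Rmult_le_compat; lra.
Qed.

Lemma prod_const c : \big[Rmult/1]_(b : B) c = c ^ #|B|.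
Proof.
rewrite big_const cardE; elim: (size _) => [|k IH] //=; by rewrite IH.
Qed.

End Fin.

Lemma bern x y n : 0 <= y <= x -> x <= 1 -> x ^ n - INR n * y <= (x - y) ^ n.
Proof.
move=> Hxy Hx; elim: n => [|n IH]; first by rewrite /=; lra.
rewrite S_INR /=.
have h1 : 0 <= x ^ n <= 1 by split; [apply: pow_le|apply: pow_le1]; lra.
have h2 : (x ^ n - INR n * y) * (x - y) <= (x - y) ^ n * (x - y) by apply: Rmult_le_compat_r; lra.
have h3 : 0 <= INR n by apply: pos_INR.
have h4 : x ^ n * y <= y by nra.
have h5 : INR n * y * x <= INR n * y.
  have h6 : 0 <= INR n * y by nra.
  nra.
nra.
Qed.


Section Fin2.
Variable B : finType.
Variable M : (B -> nat) -> Prop.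

Lemma lower_up N a (f : B -> nat) K : upper_set B M -> M f ->
  (forall b, (f b <= K)%nat) -> (K <= N)%nat -> 0 < a <= 1 ->
  ((1 - a) ^ K) ^ #|B| - INR #|B| * (1 - a) ^ N <= FF B M N (fun _ => a).
Proof.
move=> HM Mf HfK HKN Ha.
have Hq : 0 <= 1 - a <= 1 by lra.
apply: (Rle_trans _ (\big[Rplus/0]_(g : {ffun B -> 'I_N})
    \big[Rmult/1]_(b : B) (if (f b <= g b)%nat then geom a (g b) else 0))).
  rewrite -(bigA_distr_bigA (fun (b : B) (k : 'I_N) => if (f b <= k)%nat then geom a k else 0)).
  have E : forall b : B, \big[Rplus/0]_(k < N) (if (f b <= k)%nat then geom a k else 0)
       = (1 - a) ^ (f b) - (1 - a) ^ N.
    move=> b; apply: geom_tail; exact: leq_trans (HfK b) HKN.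
  under eq_bigr => b _ do rewrite E.
  apply: (Rle_trans _ (\big[Rmult/1]_(b : B) ((1 - a) ^ K - (1 - a) ^ N))).
    rewrite prod_const.
    apply: bern; [split; [apply: pow_le; lra| exact: pow_dec]| apply: pow_le1; lra].
  apply: prod_mono => b; split.
    have := pow_dec (1 - a) N K Hq HKN; lra.
  have := pow_dec (1 - a) K (f b) Hq (HfK b); lra.
apply: sum_le => g _.
case: (boolP [forall b, (f b <= g b)%nat]) => Hfg.
  have HMg : M (nf B g) by apply: (HM f) => // b; move/forallP: Hfg => /(_ b).
  rewrite /ind; case: excluded_middle_informative => // _ /=.
  rewrite Rmult_1_l; right; apply: eq_bigr => b _.
  by move/forallP: Hfg => /(_ b) ->.
move/forallPn: Hfg => [b Hb].
rewrite (bigD1 b) //= (negbTE Hb) Rmult_0_l.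
apply: Rmult_le_pos; [exact: ind_ge0|apply: Wt_ge0 => b'; lra].
Qed.

End Fin2.

Lemma lim_lb (w : nat -> R) L d C q N0 : 0 <= q < 1 -> 0 <= C -> Un_cv w L ->
  (forall N, (N0 <= N)%nat -> d - C * q ^ N <= w N) -> d <= L.
Proof.
move=> Hq HC Hw HN.
apply: Rnot_lt_le => HL.
set e := (d - L) / 2.
have He : 0 < e by rewrite /e; lra.
have [N1 HN1] := Hw e He.
have Hq' : Rabs q < 1 by rewrite Rabs_right; lra.
have He' : 0 < e / (C + 1) by apply: Rdiv_lt_0_compat; lra.
have [N2 HN2] := pow_lt_1_zero q Hq' _ He'.
set n := maxn N0 (maxn N1 N2).
have h1 := HN1 n (ltac:(apply/leP; rewrite /n; by rewrite leq_max leq_maxl orbT)).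
have h2 := HN2 n (ltac:(apply/leP; rewrite /n; by rewrite leq_max leq_maxr orbT)).
have h3 := HN n (ltac:(by rewrite /n leq_maxl)).
rewrite /R_dist in h1.
have h4 : 0 <= q ^ n by apply: pow_le; lra.
rewrite Rabs_right in h2; last lra.
have h5 : C * q ^ n <= C * (e / (C + 1)) by apply: Rmult_le_compat_l; lra.
have h6 : C * (e / (C + 1)) < e.
  have -> : C * (e / (C + 1)) = e - e / (C + 1) by field; lra.
  lra.
have [h7 h8] := Rabs_def2 _ _ h1.
have He2 : e = (d - L) / 2 by [].
lra.
Qed.

Lemma lim_ub (w : nat -> R) L C N0 : Un_cv w L ->
  (forall N, (N0 <= N)%nat -> w N <= C) -> L <= C.
Proof.
move=> Hw HN.
have := @lim_lb (opp_seq w) (- L) (- C) 0 0 N0 (ltac:(lra)) (Rle_refl 0) (CV_opp _ _ Hw).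
rewrite /opp_seq => H.
suff : - C <= - L by lra.
apply: H => N HN0; have := HN N HN0; lra.
Qed.

Lemma nu_eq (B : finType) T M l : Un_cv (nu_partial B T M) l -> nu B T M = l.
Proof.
move=> Hl; rewrite /nu.
have H := epsilon_spec (inhabits 0) (fun v => Un_cv (nu_partial B T M) v) (ex_intro _ l Hl).
exact: (UL_sequence _ _ _ H Hl).
Qed.

Lemma cv_const0 : Un_cv (fun _ => 0) 0.
Proof. move=> e He; exists 0%nat => n _; rewrite /R_dist Rminus_diag Rabs_R0; lra. Qed.

Lemma nparam (B : finType) T : (0 < #|B|)%coq_nat -> 0 <= T ->
  nu_param B T = INR #|B| / (INR #|B| + T).
Proof.
move=> HB HT; have Hn : 0 < INR #|B| by apply: lt_0_INR.
rewrite /nu_param; field; split; lra.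
Qed.

Lemma param_bounds (B : finType) T : (0 < #|B|)%coq_nat -> 0 <= T ->
  0 < nu_param B T <= 1.
Proof.
move=> HB HT; have Hn : 0 < INR #|B| by apply: lt_0_INR.
rewrite nparam //; split; first by apply: Rdiv_lt_0_compat; lra.
apply: (Rmult_le_reg_r (INR #|B| + T)); first lra.
rewrite /Rdiv Rmult_assoc Rinv_l; lra.
Qed.

Lemma nu_cv (B : finType) M T : (0 < #|B|)%coq_nat -> 0 <= T ->
  Un_cv (fun N => FF B M N (fun _ => nu_param B T)) (nu B T M).
Proof.
move=> HB HT.
have Hr : forall b : B, 0 <= (fun _ => nu_param B T) b <= 1.
  move=> b; have := param_bounds B T HB HT; lra.
have [l Hl] := growing_cv _ (FF_growing B M _ Hr) (ltac:(exists 1; move=> x [i ->]; by case: (FF_bounds B M i _ Hr))).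
by rewrite (@nu_eq B T M l Hl).
Qed.

Lemma nu_le1 (B : finType) M T : (0 < #|B|)%coq_nat -> 0 <= T -> nu B T M <= 1.
Proof.
move=> HB HT; apply: (@lim_ub _ _ _ 0%nat (nu_cv B M T HB HT)) => N _.
have Hr : forall b : B, 0 <= (fun _ => nu_param B T) b <= 1.
  move=> b; have := param_bounds B T HB HT; lra.
by case: (FF_bounds B M N _ Hr).
Qed.

Lemma nu_mono (B : finType) M (HB : (0 < #|B|)%coq_nat) (HM : upper_set B M) f (Mf : M f)
  (H0 : ~ M (fun _ => 0%nat)) x y : 0 <= x -> x < y ->
  nu B x M < nu B y M /\ nu B y M - nu B x M <= y - x.
Proof.
move=> Hx Hxy.
have Hn : 0 < INR #|B| by apply: lt_0_INR.
have Ea : nu_param B x * (INR #|B| + x) = INR #|B|.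
  rewrite (nparam B x HB Hx); field; lra.
have Ea' : nu_param B y * (INR #|B| + y) = INR #|B|.
  rewrite (nparam B y HB (ltac:(lra))); field; lra.
set n := INR #|B| in Hn Ea Ea'.
have [Ha0 Ha1] := param_bounds B x HB Hx.
have [Ha'0 Ha'1] := param_bounds B y HB (ltac:(lra)).
set a := nu_param B x in Ea Ha0 Ha1 *.
set a' := nu_param B y in Ea' Ha'0 Ha'1 *.
have Haa : a' < a.
  apply: Rnot_le_lt => H.
  have : a * (n + x) <= a' * (n + x) by apply: Rmult_le_compat_r; lra.
  have : a' * (n + x) < a' * (n + y) by apply: Rmult_lt_compat_l; lra.
  lra.
have Ha'1s : a' < 1.
  apply: Rnot_le_lt => H.
  have : 1 * (n + y) <= a' * (n + y) by apply: Rmult_le_compat_r; lra.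
  lra.
have Hlip : n * (a - a') <= (y - x) * a'.
  have : x * (a' - a) <= 0 by nra.
  nra.
have Hw := CV_minus _ _ _ _ (nu_cv B M y HB (ltac:(lra))) (nu_cv B M x HB Hx).
have Ers : rs B (enum B) a a' = fun _ => a'.
  by apply: functional_extensionality => b; rewrite /rs mem_enum.
have Ers0 : rs B [::] a a' = fun _ => a.
  by apply: functional_extensionality => b; rewrite /rs in_nil.
have Hsz : INR (size (enum B)) = n by rewrite /n -cardE.
have Haa' : 0 < a' <= a by lra.
split.
  have Hhs : M (hs B f (enum B)).
    have -> : hs B f (enum B) = f by apply: functional_extensionality => b; rewrite /hs mem_enum.
    done.
  have [d [Hd HN]] := @chain_strict B M a a' f HM H0 (ltac:(lra)) Ha1 Ha'1s (enum B) Hhs.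
  suff : d <= nu B y M - nu B x M by lra.
  apply: (@lim_lb _ _ d n (1 - a') (\max_(b : B) f b).+1 (ltac:(lra)) (ltac:(lra)) Hw).
  case=> [//|N] HN'.
  have := HN N (fun b => leq_ltn_trans (@leq_bigmax B f b) HN').
  by rewrite Ers Ers0 Hsz.
have Hub : nu B y M - nu B x M <= n * (a - a') / a'.
  apply: (@lim_ub _ _ _ 1%nat Hw); case=> [//|N] _.
  have [_ C2] := @chain B M N a a' HM Haa' Ha1 (enum B).
  rewrite Ers Ers0 Hsz in C2. rewrite -/a -/a'.
  apply: (Rmult_le_reg_r a'); first lra.
  rewrite /Rdiv Rmult_assoc Rinv_l; lra.
apply: (Rle_trans _ _ _ Hub).
apply: (Rmult_le_reg_r a'); first lra.
rewrite /Rdiv Rmult_assoc Rinv_l; lra.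
Qed.

Lemma nu_lb_up (B : finType) M (HB : (0 < #|B|)%coq_nat) (HM : upper_set B M) f (Mf : M f) x :
  0 <= x -> ((1 - nu_param B x) ^ (\max_(b : B) f b)) ^ #|B| <= nu B x M.
Proof.
move=> Hx.
have [Ha0 Ha1] := param_bounds B x HB Hx.
apply: (@lim_lb _ _ _ (INR #|B|) (1 - nu_param B x) (\max_(b : B) f b) (ltac:(lra)) (pos_INR _) (nu_cv B M x HB Hx)).
move=> N HN.
apply: (@lower_up B M N (nu_param B x) f (\max_(b : B) f b) HM Mf _ HN (ltac:(lra))).
move=> b; exact: leq_bigmax.
Qed.

Theorem theorem7 (B : finType) (HB : (0 < #|B|)%coq_nat)
    (M : (B -> nat) -> Prop) (HM : upper_set B M) :
  ((forall f, ~ M f) -> forall x, 0 <= x -> nu B x M = 0) /\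
  ((forall f, M f) -> forall x, 0 <= x -> nu B x M = 1) /\
  ((exists f, M f) -> (exists g, ~ M g) ->
     (forall x y, 0 <= x -> x < y -> nu B x M < nu B y M) /\
     (forall x, 0 <= x ->
        limit1_in (fun y => nu B y M) (fun y => 0 <= y) (nu B x M) x) /\
     nu B 0 M = 0 /\
     (forall eps, 0 < eps -> exists X, forall x, X <= x -> Rabs (nu B x M - 1) < eps)).
Proof.
have Hn : 0 < INR #|B| by apply: lt_0_INR.
split.
  move=> Hempty x Hx; apply: nu_eq.
  have -> : nu_partial B x M = fun _ => 0.
    apply: functional_extensionality => N; rewrite partial_FF /FF big1 // => g _.
    rewrite /ind; case: excluded_middle_informative => [H|_] /=; first by case: (Hempty _ H).
    ring.
  exact: cv_const0.
split.
  move=> Hfull x Hx.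
  apply: Rle_antisym; first exact: nu_le1.
  have := @nu_lb_up B M HB HM (fun _ => 0%nat) (Hfull _) x Hx.
  have -> : (\max_(b : B) (fun _ => 0%nat) b) = 0%nat by apply/eqP; rewrite -leqn0; apply/bigmax_leqP.
  by rewrite /= pow1.
move=> [f Mf] [g nMg].
have H0 : ~ M (fun _ => 0%nat).
  move=> H; apply: nMg; exact: (HM _ _ (fun b => leq0n (g b)) H).
have Hmono := @nu_mono B M HB HM f Mf H0.
split; first by move=> x y Hx Hxy; case: (Hmono x y Hx Hxy).
split.
  move=> x Hx eps He; exists eps; split; first lra.
  move=> y [Hy Hd]; rewrite /= /R_dist in Hd *.
  case: (Rtotal_order x y) => [Hxy|[Exy|Hxy]].
  - have [h1 h2] := Hmono x y Hx Hxy.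
    rewrite Rabs_right; last lra.
    rewrite Rabs_right in Hd; lra.
  - by rewrite Exy Rminus_diag Rabs_R0.
  - have [h1 h2] := Hmono y x Hy Hxy.
    rewrite Rabs_left; last lra.
    rewrite Rabs_left in Hd; lra.
split.
  apply: nu_eq.
  have -> : nu_partial B 0 M = fun _ => 0.
    have Hp : nu_param B 0 = 1 by rewrite /nu_param /Rdiv Rmult_0_l Rplus_0_r Rinv_1.
    apply: functional_extensionality => N; rewrite partial_FF /FF big1 // => g0 _.
    case: (boolP [exists b, (0 < g0 b)%nat]) => Hg.
      move/existsP: Hg => [b Hb].
      rewrite /Wt (bigD1 b) //= /geom Hp Rminus_diag pow_i; last by apply/ltP.
      ring.
    have Eg : nf B g0 = fun _ => 0%nat.
      apply: functional_extensionality => b; rewrite /nf.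
      move/existsPn: Hg => /(_ b); by rewrite lt0n negbK => /eqP.
    rewrite Eg /ind; case: excluded_middle_informative => [H|_] /=; first by case: (H0 H).
    ring.
  exact: cv_const0.
move=> eps He.
set K := \max_(b : B) f b.
set m := (K * #|B|)%coq_nat.
exists (INR m * INR #|B| / eps + 1) => x Hx.
have HmN : 0 <= INR m * INR #|B| by apply: Rmult_le_pos; apply: pos_INR.
have Hq : 0 <= INR m * INR #|B| / eps by apply: Rmult_le_pos => //; apply: Rlt_le; apply: Rinv_0_lt_compat.
have Hx0 : 0 < x by lra.
have Hle1 := @nu_le1 B M x HB (ltac:(lra)).
have Hlb := @nu_lb_up B M HB HM f Mf x (ltac:(lra)).
have [Ha0 Ha1] := param_bounds B x HB (ltac:(lra)).
have Ea : nu_param B x * (INR #|B| + x) = INR #|B|.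
  rewrite (nparam B x HB (ltac:(lra))); field; lra.
set a := nu_param B x in Ha0 Ha1 Ea Hlb.
rewrite -pow_mult -/K -/m in Hlb.
have Hbern := @bern 1 a m (ltac:(lra)) (Rle_refl 1).
rewrite pow1 in Hbern.
have Hma : INR m * a < eps.
  have Hx' : INR m * INR #|B| < eps * x.
    have : INR m * INR #|B| / eps * eps = INR m * INR #|B| by field; lra.
    nra.
  have : INR m * a * (INR #|B| + x) = INR m * INR #|B| by rewrite Rmult_assoc Ea.
  have : 0 <= INR m by apply: pos_INR.
  nra.
rewrite Rabs_left1; lra.
Qed.
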